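(* Let $R$ be an integral domain, $n$ a positive integer, and $I$ an ideal of $R$. Then $\langle I,X\rangle$ is a weakly $n$-absorbing ideal of the polynomial ring $R[X]$ if and only if $I$ is a weakly $n$-absorbing ideal of $R$.
   Context: All rings are commutative with $1\neq0$. A proper ideal $I$ of a ring $R$ is weakly $n$-absorbing if whenever $0\neq a_1\cdots a_{n+1}\in I$ with $a_1,\dots,a_{n+1}\in R$, there are $n$ of the $a_i$'s whose product is in $I$. $\langle I,X\rangle$ denotes the ideal of $R[X]$ generated by $I$ and $X$. *)

(* Defs.v *)
From HB Require Import structures.
From mathcomp Require Import all_boot all_order all_algebra.
Set Implicit Arguments. Unset Strict Implicit. Unset Printing Implicit Defensive.
Import GRing.Theory.
Local Open Scope ring_scope.

Definition is_ideal (R : comNzRingType) (I : R -> Prop) : Prop :=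
  [/\ I 0,
      (forall x y, I x -> I y -> I (x + y)) &
      (forall a x, I x -> I (a * x))].

Definition proper_ideal (R : comNzRingType) (I : R -> Prop) : Prop :=
  is_ideal I /\ ~ I 1.

Definition weakly_n_absorbing (R : comNzRingType) (n : nat) (I : R -> Prop) : Prop :=
  proper_ideal I /\
  forall a : 'I_n.+1 -> R,
    \prod_(i < n.+1) a i != 0 -> I (\prod_(i < n.+1) a i) ->
    exists j : 'I_n.+1, I (\prod_(i < n.+1 | i != j) a i).

Definition ideal_gen (R : comNzRingType) (S : R -> Prop) : R -> Prop :=
  fun x => exists s : seq (R * R),
    (forall p, p \in s -> S p.2) /\ x = \sum_(p <- s) p.1 * p.2.

Definition ideal_IX (R : comNzRingType) (I : R -> Prop) : {poly R} -> Prop :=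
  ideal_gen (fun f : {poly R} => (exists c, I c /\ f = c%:P) \/ f = 'X).

(* Main.v *)
Require Import Defs.
From mathcomp Require Import all_boot all_order all_algebra.
Local Open Scope ring_scope.
Import GRing.Theory.

Lemma IX_iff (R : comNzRingType) (I : R -> Prop) :
  is_ideal I -> forall f : {poly R}, (ideal_IX I f <-> I f.[0]).
Proof.
case=> I0 ID IM f; split.
  case=> s [Hs ->]; rewrite horner_sum.
  elim: s Hs => [|p s IH] Hs; first by rewrite big_nil.
  rewrite big_cons; apply: ID; last by apply: IH => q qs; apply: Hs; rewrite inE qs orbT.
  rewrite hornerM; apply: IM.
  have := Hs p; rewrite inE eqxx => /(_ isT) [[c [Ic ->]]|->].
    by rewrite hornerC.
  by rewrite hornerX.
move=> Hf.
have : root (f - f.[0]%:P) 0 by rewrite rootE !hornerE subrr.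
case/factor_theorem => q Hq.
exists [:: (1, f.[0]%:P); (q, 'X)]; split.
  move=> p; rewrite !inE => /orP [/eqP ->|/eqP ->]; first by left; exists f.[0].
  by right.
by rewrite !big_cons big_nil addr0 mul1r /= -(subr0 'X) -Hq addrC subrK.
Qed.

Arguments IX_iff {R I}.

Theorem mainTheorem3 (R : idomainType) (n : nat) (I : R -> Prop) :
  (0 < n)%N -> is_ideal I ->
  (weakly_n_absorbing n (ideal_IX I) <-> weakly_n_absorbing n I).
Proof.
move=> n0 II; split.
  case=> [[_ P1] H]; split.
    split => // I1; apply: P1; apply/IX_iff => //; by rewrite hornerC.
  move=> a Hn Hi.
  have Hn' : \prod_(i < n.+1) (a i)%:P != 0 by rewrite -rmorph_prod polyC_eq0.
  have Hi' : ideal_IX I (\prod_(i < n.+1) (a i)%:P).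
    by apply/IX_iff => //; rewrite -rmorph_prod hornerC.
  have [j Hj] := H (fun i => (a i)%:P) Hn' Hi'.
  exists j; move/IX_iff: Hj => /(_ II); by rewrite -rmorph_prod hornerC.
case=> [[_ P1] H]; split.
  split; last by move/IX_iff => /(_ II); rewrite hornerC.
  move: (II) => [I0 ID IM]; split.
  - by apply: (proj2 (IX_iff II _)); rewrite horner0.
  - move=> x y /(proj1 (IX_iff II _)) Hx /(proj1 (IX_iff II _)) Hy.
    by apply: (proj2 (IX_iff II _)); rewrite hornerD; apply: ID.
  - move=> a x /(proj1 (IX_iff II _)) Hx.
    by apply: (proj2 (IX_iff II _)); rewrite hornerM; apply: IM.
move=> f Hn /(proj1 (IX_iff II _)); rewrite horner_prod => Hi.
have [Hz|Hnz] := eqVneq (\prod_(i < n.+1) (f i).[0]) 0.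
  move/eqP: Hz; rewrite prodf_seq_eq0 => /hasP [j _ /= /eqP Hj].
  pose k : 'I_n.+1 := if j == ord0 then ord_max else ord0.
  have kj : k != j.
    rewrite /k; case: (eqVneq j ord0) => [->|jn].
      by rewrite -(inj_eq val_inj) /= -lt0n.
    by rewrite eq_sym.
  exists k; apply: (proj2 (IX_iff II _)); rewrite horner_prod (bigD1 j) //=; last by rewrite eq_sym.
  case: II => I0 _ IM; rewrite mulrC; apply: IM; by move: Hj => /= ->.
have [j Hj] := H (fun i => (f i).[0]) Hnz Hi.
by exists j; apply: (proj2 (IX_iff II _)); rewrite horner_prod.
Qed.
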